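(* Let $N\in\mathbb{N}$ and consider the infinite $N$-ary tree with vertex set $V$, conductance $1$ on every edge and base point $o=\emptyset$. For $x\in V$ let $v_x$ be the potential solving $\Delta v_x=\delta_\emptyset-\delta_x$ in the energy space. If $x,y,z\in V$ satisfy $x\le y\le z$ in the prefix order (i.e., $y=xr$ and $z=ys$ for some words $r,s$), then $$\mathcal E(v_x-v_y,\,v_y-v_z)=0.$$
   Context: $V$ is the set of finite words over $\{1,\dots,N\}$ including the empty word $\emptyset$; edges are exactly the pairs $\{\omega,\omega i\}$ ($\omega i$ = $\omega$ with letter $i$ appended); concatenation of words is written by juxtaposition. The Laplacian is $(\Delta v)(x)=\sum_{y\sim x}(v(x)-v(y))$. The energy form is $\mathcal E(u',u)=\sum_{x\in V}\sum_{y\sim x}\overline{(u'(x)-u'(y))}(u(x)-u(y))$, and the energy space $E$ is the completion (modulo constants) of functions with $\mathcal E(u,u)<\infty$; $v_x\in E$ is the solution, unique up to additive constants, of $\Delta v_x=\delta_\emptyset-\delta_x$ (with $v_\emptyset$ constant). *)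

(* Defs.v *)
From Stdlib Require Import Reals List.
From Coquelicot Require Import Coquelicot.
Import ListNotations.
Open Scope R_scope.

(* Words over {1,...,N}; a word is a list of letters, [] is the root (empty word). *)
Definition word := list nat.

Definition is_vertex (N : nat) (w : word) : Prop :=
  List.Forall (fun i => (1 <= i <= N)%nat) w.

Definition parent_list (x : word) : list word :=
  match x with [] => [] | _ :: _ => [removelast x] end.
Definition children (N : nat) (x : word) : list word :=
  map (fun i => x ++ [i]) (seq 1 N).
Definition nbrs (N : nat) (x : word) : list word := parent_list x ++ children N x.

Definition Csum (l : list C) : C := fold_right Cplus (RtoC 0) l.

Definition lap (N : nat) (v : word -> C) (x : word) : C :=
  Csum (map (fun y => Cminus (v x) (v y)) (nbrs N x)).

Definition energy_density (N : nat) (u' u : word -> C) (x : word) : C :=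
  Csum (map (fun y => Cmult (Cconj (Cminus (u' x) (u' y))) (Cminus (u x) (u y)))
            (nbrs N x)).

Definition has_sum_V (N : nat) (f : word -> C) (S : C) : Prop :=
  forall eps, 0 < eps ->
    exists F0 : list word, List.Forall (is_vertex N) F0 /\
      forall F : list word, NoDup F -> List.Forall (is_vertex N) F -> incl F0 F ->
        Cmod (Cminus (Csum (map f F)) S) < eps.

Definition energy_is (N : nat) (u' u : word -> C) (S : C) : Prop :=
  has_sum_V N (energy_density N u' u) S.

Definition finite_energy (N : nat) (u : word -> C) : Prop :=
  exists S, energy_is N u u S.

Definition delta (a : word) (w : word) : C :=
  if list_eq_dec Nat.eq_dec w a then RtoC 1 else RtoC 0.

(* v is (a representative of) the potential v_x: the element of the energy space
   with Delta v = delta_root - delta_x, characterised (as in Jorgensen--Pearse)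
   by the reproducing identity E(v, u) = 2 (u(root) - u(x)) for every finite-energy u
   (the factor 2 comes from the convention that E counts each edge twice, and makes
   the identity consistent with Delta v = delta_root - delta_x). *)
Definition is_potential (N : nat) (x : word) (v : word -> C) : Prop :=
  finite_energy N v /\
  (forall w, is_vertex N w -> lap N v w = Cminus (delta [] w) (delta x w)) /\
  (forall u, finite_energy N u ->
     energy_is N v u (Cmult (RtoC 2) (Cminus (u []) (u x)))).

(* Main.v *)
Require Import Defs.
From Stdlib Require Import Reals List Lra Lia.
From Coquelicot Require Import Coquelicot.
Import ListNotations.
Open Scope R_scope.
Ltac ceq := apply injective_projections; simpl; ring.
Lemma Csum_map_plus {A} (f g : A -> C) l :
  Csum (map (fun y => Cplus (f y) (g y)) l) = Cplus (Csum (map f l)) (Csum (map g l)).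
Proof. induction l; simpl. ceq. rewrite IHl. ceq. Qed.

Lemma Csum_map_minus {A} (f g : A -> C) l :
  Csum (map (fun y => Cminus (f y) (g y)) l) = Cminus (Csum (map f l)) (Csum (map g l)).
Proof. induction l; simpl. ceq. rewrite IHl. ceq. Qed.

Lemma Csum_map_conj {A} (f : A -> C) l :
  Cconj (Csum (map f l)) = Csum (map (fun y => Cconj (f y)) l).
Proof. induction l; simpl. ceq. rewrite <- IHl. ceq. Qed.

Lemma Csum_zero {A} (f : A -> C) l :
  (forall y, In y l -> f y = RtoC 0) -> Csum (map f l) = RtoC 0.
Proof. induction l; simpl; intros H. reflexivity.
  rewrite H by auto. rewrite IHl by auto. ceq. Qed.

Lemma Csum_one {A} (dec : forall a b : A, {a = b} + {a <> b}) (f : A -> C) l a :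
  NoDup l -> (forall b, b <> a -> f b = RtoC 0) ->
  Csum (map f l) = if in_dec dec a l then f a else RtoC 0.
Proof.
  induction l as [|b l IH]; intros Hn Hf; simpl. reflexivity.
  inversion Hn; subst. rewrite IH by auto.
  destruct (dec b a) as [->|Hba].
  - destruct (in_dec dec a l); [contradiction|]. ceq.
  - rewrite Hf by auto. destruct (in_dec dec a l).
    + ceq.
    + ceq.
Qed.

Lemma Csum_two (f : word -> C) l p q :
  NoDup l -> p <> q -> In p l -> In q l ->
  (forall w, w <> p -> w <> q -> f w = RtoC 0) ->
  Csum (map f l) = Cplus (f p) (f q).
Proof.
  intros Hn Hpq Hp Hq Hf.
  set (ldec := list_eq_dec Nat.eq_dec).
  transitivity (Csum (map (fun w => Cplus (if ldec w p then f w else RtoC 0)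
                                          (if ldec w p then RtoC 0 else f w)) l)).
  { apply f_equal, map_ext. intro w. destruct (ldec w p); ceq. }
  rewrite Csum_map_plus.
  rewrite (Csum_one ldec _ l p Hn), (Csum_one ldec _ l q Hn).
  - destruct (in_dec ldec p l); [|contradiction].
    destruct (in_dec ldec q l); [|contradiction].
    destruct (ldec p p); [|congruence]. destruct (ldec q p); [congruence|]. ceq.
  - intros b Hb. destruct (ldec b p). reflexivity. apply Hf; auto.
  - intros b Hb. destruct (ldec b p); auto.
Qed.

Lemma has_sum_plus N f g S T :
  has_sum_V N f S -> has_sum_V N g T ->
  has_sum_V N (fun w => Cplus (f w) (g w)) (Cplus S T).
Proof.
  intros Hf Hg eps He.
  destruct (Hf (eps/2)) as [F1 [V1 H1]]; [lra|].
  destruct (Hg (eps/2)) as [F2 [V2 H2]]; [lra|].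
  exists (F1 ++ F2). split. apply List.Forall_app; auto.
  intros F Hn Hv Hi.
  assert (A1 := H1 F Hn Hv (fun a h => Hi a (in_or_app _ _ _ (or_introl h)))).
  assert (A2 := H2 F Hn Hv (fun a h => Hi a (in_or_app _ _ _ (or_intror h)))).
  rewrite Csum_map_plus.
  replace (Cminus (Cplus (Csum (map f F)) (Csum (map g F))) (Cplus S T))
    with (Cplus (Cminus (Csum (map f F)) S) (Cminus (Csum (map g F)) T)) by ceq.
  eapply Rle_lt_trans. apply Cmod_triangle. lra.
Qed.

Lemma has_sum_opp N f S :
  has_sum_V N f S -> has_sum_V N (fun w => Copp (f w)) (Copp S).
Proof.
  intros Hf eps He. destruct (Hf eps He) as [F1 [V1 H1]]. exists F1. split; auto.
  intros F Hn Hv Hi. specialize (H1 F Hn Hv Hi).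
  replace (Csum (map (fun w => Copp (f w)) F)) with (Copp (Csum (map f F))).
  replace (Cminus (Copp (Csum (map f F))) (Copp S)) with (Copp (Cminus (Csum (map f F)) S)) by ceq.
  rewrite Cmod_opp; auto.
  clear. induction F; simpl. ceq. rewrite <- IHF. ceq.
Qed.

Lemma has_sum_conj N f S :
  has_sum_V N f S -> has_sum_V N (fun w => Cconj (f w)) (Cconj S).
Proof.
  intros Hf eps He. destruct (Hf eps He) as [F1 [V1 H1]]. exists F1. split; auto.
  intros F Hn Hv Hi. specialize (H1 F Hn Hv Hi).
  rewrite <- Csum_map_conj.
  replace (Cminus (Cconj (Csum (map f F))) (Cconj S)) with (Cconj (Cminus (Csum (map f F)) S)) by ceq.
  rewrite Cmod_conj; auto.
Qed.

Lemma has_sum_ext N f g S T :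
  (forall w, f w = g w) -> S = T -> has_sum_V N f S -> has_sum_V N g T.
Proof.
  intros E <- Hf eps He. destruct (Hf eps He) as [F1 [V1 H1]]. exists F1. split; auto.
  intros F Hn Hv Hi. rewrite <- (map_ext _ _ E). auto.
Qed.

Lemma has_sum_unique N f S T :
  has_sum_V N f S -> has_sum_V N f T -> S = T.
Proof.
  intros Hf Hg.
  assert (forall eps, 0 < eps -> Cmod (Cminus S T) < eps).
  { intros eps He.
    destruct (Hf (eps/2)) as [F1 [V1 H1]]; [lra|].
    destruct (Hg (eps/2)) as [F2 [V2 H2]]; [lra|].
    set (F := nodup (list_eq_dec Nat.eq_dec) (F1 ++ F2)).
    assert (Hn : NoDup F) by apply NoDup_nodup.
    assert (Hv : List.Forall (is_vertex N) F).
    { apply Forall_forall. intros a Ha. apply nodup_In in Ha.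
      apply in_app_or in Ha as [Ha|Ha]; [eapply Forall_forall in V1|eapply Forall_forall in V2]; eauto. }
    assert (A1 := H1 F Hn Hv (fun a h => proj2 (nodup_In _ _ _) (in_or_app _ _ _ (or_introl h)))).
    assert (A2 := H2 F Hn Hv (fun a h => proj2 (nodup_In _ _ _) (in_or_app _ _ _ (or_intror h)))).
    replace (Cminus S T) with (Cplus (Copp (Cminus (Csum (map f F)) S)) (Cminus (Csum (map f F)) T)) by ceq.
    eapply Rle_lt_trans. apply Cmod_triangle. rewrite Cmod_opp. lra. }
  assert (Cmod (Cminus S T) = 0).
  { destruct (Cmod_ge_0 (Cminus S T)) as [h|h]; auto.
    specialize (H _ h). lra. }
  apply Cmod_eq_0 in H0.
  replace S with (Cplus (Cminus S T) T) by ceq. rewrite H0. ceq.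
Qed.
Definition indp (p : word) (w : word) : C :=
  if list_eq_dec Nat.eq_dec (firstn (length p) w) p then RtoC 1 else RtoC 0.

Lemma firstn_len_app (p t : word) : firstn (length p) (p ++ t) = p.
Proof. induction p; simpl; auto. rewrite IHp; auto. Qed.

Lemma pref_iff (p w : word) : firstn (length p) w = p <-> exists t, w = p ++ t.
Proof. split.
  - intros H. exists (skipn (length p) w). rewrite <- H at 1. rewrite firstn_skipn; auto.
  - intros [t ->]. apply firstn_len_app. Qed.

Lemma ind_app p t : indp p (p ++ t) = RtoC 1.
Proof. unfold indp. rewrite firstn_len_app. destruct list_eq_dec; congruence. Qed.

Lemma ind_short p w : (length w < length p)%nat -> indp p w = RtoC 0.
Proof. intros H. unfold indp. destruct list_eq_dec as [e|]; auto.
  apply pref_iff in e. destruct e as [t ->]. rewrite length_app in H. lia. Qed.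

Lemma ind_one_or_zero p w : indp p w = RtoC 1 /\ (exists t, w = p ++ t) \/ indp p w = RtoC 0 /\ ~ (exists t, w = p ++ t).
Proof. unfold indp. destruct list_eq_dec as [e|e].
  - left. split; auto. apply pref_iff; auto.
  - right. split; auto. rewrite <- pref_iff. auto. Qed.

Lemma ind_nbr_eq p w y : p <> [] -> w <> p -> w <> removelast p -> In y (nbrs 0 w ++ nbrs 1 w) \/ True -> False -> True.
Proof. auto. Qed.

Lemma ind_child p w i : w <> removelast p -> indp p (w ++ [i]) = indp p w.
Proof.
  intros Hq.
  destruct (ind_one_or_zero p w) as [[E1 P1]|[E1 P1]];
  destruct (ind_one_or_zero p (w ++ [i])) as [[E2 P2]|[E2 P2]]; try congruence.
  - exfalso. apply P2. destruct P1 as [t ->]. exists (t ++ [i]). rewrite app_assoc; auto.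
  - exfalso. destruct P2 as [t Ht]. destruct t as [|a t'] using rev_ind.
    + apply Hq. rewrite app_nil_r in Ht. rewrite <- Ht. rewrite removelast_last. auto.
    + apply P1. rewrite app_assoc in Ht. apply app_inj_tail in Ht. exists t'. tauto.
Qed.

Lemma ind_parent p w : w <> p -> indp p (removelast w) = indp p w.
Proof.
  intros Hp. destruct w as [|a w'] using rev_ind; [reflexivity|]. clear IHw'.
  rewrite removelast_last.
  destruct (ind_one_or_zero p w') as [[E1 P1]|[E1 P1]];
  destruct (ind_one_or_zero p (w' ++ [a])) as [[E2 P2]|[E2 P2]]; try congruence.
  - exfalso. apply P2. destruct P1 as [t ->]. exists (t ++ [a]). rewrite app_assoc; auto.
  - exfalso. apply P1. destruct P2 as [t Ht]. destruct t as [|b t'] using rev_ind.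
    + rewrite app_nil_r in Ht. congruence.
    + rewrite app_assoc in Ht. apply app_inj_tail in Ht. exists t'. tauto.
Qed.

Lemma Csum_app {A} (f : A -> C) l1 l2 :
  Csum (map f (l1 ++ l2)) = Cplus (Csum (map f l1)) (Csum (map f l2)).
Proof. induction l1; simpl. ceq. rewrite IHl1. ceq. Qed.

Lemma dens_zero N p u w : w <> p -> w <> removelast p ->
  energy_density N (indp p) u w = RtoC 0.
Proof.
  intros H1 H2. unfold energy_density. apply Csum_zero.
  intros y Hy. unfold nbrs in Hy. apply in_app_or in Hy as [Hy|Hy].
  - destruct w as [|a w0] eqn:Ew; cbn [parent_list In] in Hy; [contradiction|].
    rewrite <- Ew in *.
    destruct Hy as [<-|[]]. rewrite ind_parent by auto. ceq.
  - unfold children in Hy. apply in_map_iff in Hy as [i [<- _]].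
    rewrite ind_child by auto. ceq.
Qed.

Lemma dens_p N p u : p <> [] ->
  energy_density N (indp p) u p = Cminus (u p) (u (removelast p)).
Proof.
  intros Hp. unfold energy_density, nbrs.
  assert (Epl : parent_list p = [removelast p]) by (destruct p; [congruence|reflexivity]).
  rewrite Epl.
  rewrite Csum_app. rewrite (Csum_zero _ (children N p)).
  - simpl. rewrite (ind_short p (removelast p)).
    assert (indp p p = RtoC 1) as ->. { rewrite <- (ind_app p []), app_nil_r; auto. }
    ceq.
    rewrite (app_removelast_last 0%nat Hp) at 2. rewrite length_app. simpl. lia.
  - intros y Hy. unfold children in Hy. apply in_map_iff in Hy as [i [<- _]].
    rewrite ind_app. assert (indp p p = RtoC 1) as ->. { rewrite <- (ind_app p []), app_nil_r; auto. }
    ceq.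
Qed.

Lemma dens_q N p u : p <> [] -> is_vertex N p ->
  energy_density N (indp p) u (removelast p) = Cminus (u p) (u (removelast p)).
Proof.
  intros Hp Hv. set (q := removelast p).
  set (j := last p 0%nat).
  assert (Epq : p = q ++ [j]) by apply (app_removelast_last 0%nat Hp).
  assert (Hj : (1 <= j <= N)%nat).
  { unfold is_vertex in Hv. rewrite Epq in Hv. apply List.Forall_app in Hv as [_ Hv].
    inversion Hv; auto. }
  unfold energy_density, nbrs. rewrite Csum_app.
  rewrite (Csum_zero _ (parent_list q)).
  - unfold children. rewrite map_map.
    rewrite (Csum_one Nat.eq_dec _ (seq 1 N) j (seq_NoDup _ _)).
    + destruct (in_dec Nat.eq_dec j (seq 1 N)) as [_|n].
      * rewrite <- Epq. assert (indp p p = RtoC 1) as ->. { rewrite <- (ind_app p []), app_nil_r; auto. }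
        rewrite ind_short by (rewrite Epq, length_app; simpl; lia). ceq.
      * exfalso. apply n. apply in_seq. lia.
    + intros i Hi.
      rewrite ind_short by (rewrite Epq, length_app; simpl; lia).
      destruct (ind_one_or_zero p (q ++ [i])) as [[E1 [t Ht]]|[E1 P1]].
      * exfalso. rewrite Epq, <- app_assoc in Ht. apply app_inv_head in Ht.
        simpl in Ht. inversion Ht; congruence.
      * rewrite E1. ceq.
  - intros y Hy.
    assert (length (removelast q) <= length q)%nat.
    { destruct (list_eq_dec Nat.eq_dec q []) as [e|e]; [rewrite e; simpl; lia|].
      rewrite (app_removelast_last 0%nat e) at 2. rewrite length_app. lia. }
    assert (Hl : (length q < length p)%nat) by (rewrite Epq, length_app; simpl; lia).
    clearbody q. destruct q as [|a q0] eqn:Eq; cbn [parent_list In] in Hy; [contradiction|].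
    destruct Hy as [<-|[]]. rewrite <- Eq in *.
    rewrite !ind_short by lia. ceq.
Qed.

Lemma ind_energy N p u : p <> [] -> is_vertex N p ->
  energy_is N (indp p) u (Cmult (RtoC 2) (Cminus (u p) (u (removelast p)))).
Proof.
  intros Hp Hv eps He. exists [p; removelast p].
  assert (Hneq : p <> removelast p).
  { intro E. rewrite (app_removelast_last 0%nat Hp) in E at 1.
    assert (h := f_equal (@length nat) E). rewrite length_app in h. simpl in h. lia. }
  split.
  - constructor; auto. constructor; auto.
    unfold is_vertex in *. rewrite (app_removelast_last 0%nat Hp) in Hv.
    apply List.Forall_app in Hv; tauto.
  - intros F Hn _ Hi.
    rewrite (Csum_two _ F p (removelast p)); auto.
    + rewrite dens_p, dens_q by auto.
      replace (Cminus _ _) with (RtoC 0) by ceq. rewrite Cmod_0; auto.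
    + apply Hi; simpl; auto.
    + apply Hi; simpl; auto.
    + intros; apply dens_zero; auto.
Qed.
Lemma dens_conj N a b w : Cconj (energy_density N a b w) = energy_density N b a w.
Proof. unfold energy_density. rewrite Csum_map_conj. f_equal. apply map_ext. intro; ceq. Qed.

Lemma edge N p y v s : p <> [] -> is_vertex N p -> y = p ++ s -> is_potential N y v ->
  Cminus (v p) (v (removelast p)) = RtoC (-1).
Proof.
  intros Hp Hv Hy [_ [_ Hr]].
  assert (Hfe : finite_energy N (indp p)) by (eexists; apply ind_energy; auto).
  specialize (Hr _ Hfe).
  apply has_sum_conj in Hr.
  apply (has_sum_ext _ _ (energy_density N (indp p) v) _ _ (dens_conj N v (indp p)) eq_refl) in Hr.
  pose proof (has_sum_unique _ _ _ _ Hr (ind_energy N p v Hp Hv)) as E.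
  rewrite Hy, ind_app, ind_short in E by (simpl; destruct p; [congruence|simpl; lia]).
  apply injective_projections.
  - apply (f_equal fst) in E. simpl in *. lra.
  - apply (f_equal snd) in E. simpl in *. lra.
Qed.

Lemma vertex_prefix N a b : is_vertex N (a ++ b) -> is_vertex N a.
Proof. unfold is_vertex. intros H. apply List.Forall_app in H; tauto. Qed.

Lemma key N x y z vy vz : is_vertex N y ->
  is_potential N y vy -> is_potential N z vz ->
  forall r s1 s2, y = x ++ r ++ s1 -> z = x ++ r ++ s2 ->
  Cminus (vy (x ++ r)) (vy x) = Cminus (vz (x ++ r)) (vz x).
Proof.
  intros Hvy Py Pz r. induction r as [|i r IH] using rev_ind; intros s1 s2 H1 H2.
  - rewrite app_nil_r. ceq.
  - set (p := x ++ r ++ [i]).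
    assert (Hp : p <> []) by (unfold p; destruct x; simpl; [destruct r|]; discriminate).
    assert (Hq : removelast p = x ++ r).
    { unfold p. rewrite app_assoc, removelast_last. auto. }
    assert (Hpv : is_vertex N p).
    { apply (vertex_prefix _ _ s1). replace (p ++ s1) with y by (rewrite H1; unfold p; rewrite <- !app_assoc; reflexivity). auto. }
    assert (E1 := edge N p y vy s1 Hp Hpv ltac:(rewrite H1; unfold p; rewrite <- !app_assoc; reflexivity) Py).
    assert (E2 := edge N p z vz s2 Hp Hpv ltac:(rewrite H2; unfold p; rewrite <- !app_assoc; reflexivity) Pz).
    rewrite Hq in E1, E2.
    specialize (IH ([i] ++ s1) ([i] ++ s2) ltac:(rewrite H1, <- !app_assoc; reflexivity)
                   ltac:(rewrite H2, <- !app_assoc; reflexivity)).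
    replace (x ++ r ++ [i]) with p by reflexivity.
    replace (Cminus (vy p) (vy x)) with (Cplus (Cminus (vy p) (vy (x ++ r))) (Cminus (vy (x ++ r)) (vy x))) by ceq.
    replace (Cminus (vz p) (vz x)) with (Cplus (Cminus (vz p) (vz (x ++ r))) (Cminus (vz (x ++ r)) (vz x))) by ceq.
    rewrite E1, E2, IH. reflexivity.
Qed.

Lemma Csum4 {A} (f1 f2 f3 f4 g : A -> C) l :
  (forall y, g y = Cplus (Cplus (f1 y) (Copp (f2 y))) (Cplus (Copp (f3 y)) (f4 y))) ->
  Cplus (Cplus (Csum (map f1 l)) (Copp (Csum (map f2 l))))
        (Cplus (Copp (Csum (map f3 l))) (Csum (map f4 l))) = Csum (map g l).
Proof. intros Hg. induction l; simpl. ceq. rewrite <- IHl, Hg. ceq. Qed.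

Theorem corollary4p8 (N : nat) (x y z : word) (vx vy vz : word -> C) :
  is_vertex N x -> is_vertex N y -> is_vertex N z ->
  (exists r : word, y = x ++ r) -> (exists s : word, z = y ++ s) ->
  is_potential N x vx -> is_potential N y vy -> is_potential N z vz ->
  energy_is N (fun w => Cminus (vx w) (vy w)) (fun w => Cminus (vy w) (vz w)) (RtoC 0).
Proof.
  intros Vx Vy Vz [r Hr] [s Hs] Px Py Pz.
  assert (K := key N x y z vy vz Vy Py Pz r [] s ltac:(rewrite app_nil_r; auto)
                   ltac:(rewrite Hs, Hr, app_assoc; auto)).
  rewrite <- Hr in K.
  destruct Px as [_ [_ Rx]]. destruct Py as [Fy [_ Ry]]. destruct Pz as [Fz _].
  pose proof (has_sum_plus _ _ _ _ _ (has_sum_plus _ _ _ _ _ (Rx _ Fy) (has_sum_opp _ _ _ (Rx _ Fz)))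
     (has_sum_plus _ _ _ _ _ (has_sum_opp _ _ _ (Ry _ Fy)) (Ry _ Fz))) as H.
  unfold energy_is. eapply has_sum_ext; [ | | exact H].
  - intro w. unfold energy_density. apply Csum4. intro a. ceq.
  - apply injective_projections; [apply (f_equal fst) in K|apply (f_equal snd) in K]; simpl in *; lra.
Qed.
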